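(* Let $\mathcal F:\mathbb R^d\to\mathbb R$ satisfy: (A1) $\inf\mathcal F>-\infty$; (A2) there exist $L_{\mathcal F},c_u,c_l,R_l>0$ with $|\mathcal F(x)-\mathcal F(y)|\le L_{\mathcal F}(1+|x|+|y|)|x-y|$ for all $x,y$, $\mathcal F(x)-\mathcal F(x^* )\le c_u(1+|x|^2)$ for all $x$, and $\mathcal F(x)-\mathcal F(x^* )\ge c_l|x|^2$ for all $|x|>R_l$, where $x^*$ is a global minimizer of $\mathcal F$. Let $\alpha>0$, $K>0$ and $\mu,\hat\mu\in\mathcal P(\mathbb R^d)$ with $\int|x|^4\mu(dx)\le K$ and $\int|x|^4\hat\mu(dx)\le K$. Then $$|X^\alpha[\mu]-X^\alpha[\hat\mu]|\le C_0\,\mathcal W_1(\mu,\hat\mu),$$ where $C_0>0$ depends only on $\alpha,L_{\mathcal F},K$.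
   Context: $X^\alpha[\rho]=\int x\,\omega_\alpha(x)\rho(dx)/\int\omega_\alpha(x)\rho(dx)$ with $\omega_\alpha(x)=\exp(-\alpha\mathcal F(x))$; $\mathcal W_1$ is the $1$-Wasserstein distance with respect to the Euclidean metric. *)

(* Defs.v *)
From HB Require Import structures.
From mathcomp Require Import all_boot all_order all_algebra.
From mathcomp Require Import all_classical all_reals all_analysis.
Set Implicit Arguments. Unset Strict Implicit. Unset Printing Implicit Defensive.
Import Order.TTheory GRing.Theory Num.Theory.
Import numFieldNormedType.Exports.
Local Open Scope classical_set_scope.
Local Open Scope ring_scope.

Definition Rd (R : realType) (n : nat) :=
  g_sigma_algebraType (@open 'rV[R]_n).

Definition enorm (R : realType) (n : nat) (v : 'rV[R]_n) : R :=
  Num.sqrt (\sum_(i < n) v ord0 i ^+ 2).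

Definition omega (R : realType) (n : nat) (alpha : R) (F : 'rV[R]_n -> R)
  (x : 'rV[R]_n) : R := expR (- (alpha * F x)).

Definition Xalpha (R : realType) (n : nat) (alpha : R) (F : 'rV[R]_n -> R)
  (rho : probability (Rd R n) R) : 'rV[R]_n :=
  (Rintegral rho setT (omega alpha F))^-1 *:
    \row_(i < n) Rintegral rho setT (fun x : Rd R n => x ord0 i * omega alpha F x).

Definition moment4 (R : realType) (n : nat) (rho : probability (Rd R n) R)
  : \bar R := (\int[rho]_x ((enorm x) ^+ 4)%:E)%E.

Definition coupling (R : realType) (n : nat) (mu nu : probability (Rd R n) R)
  (pi : probability (Rd R n * Rd R n)%type R) : Prop :=
  (forall A : set (Rd R n), measurable A -> pi (fst @^-1` A) = mu A) /\
  (forall A : set (Rd R n), measurable A -> pi (snd @^-1` A) = nu A).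

Definition W1 (R : realType) (n : nat) (mu nu : probability (Rd R n) R)
  : \bar R :=
  ereal_inf [set c | exists pi : probability (Rd R n * Rd R n)%type R,
     coupling mu nu pi /\
     c = (\int[pi]_z (enorm (z.1 - z.2))%:E)%E].

(* Main.v *)
Require Import Defs.
From HB Require Import structures.
From mathcomp Require Import all_boot all_order all_algebra.
From mathcomp Require Import all_classical all_reals all_analysis.
From mathcomp Require Import ring lra measurable_realfun.
Set Implicit Arguments. Unset Strict Implicit.
Import Order.TTheory GRing.Theory Num.Theory.
Import numFieldNormedType.Exports.
Local Open Scope classical_set_scope.
Local Open Scope ring_scope.
Lemma enorm_ge0 (R : realType) n (x : 'rV[R]_n) : 0 <= enorm x.
Proof. exact: sqrtr_ge0. Qed.

Lemma enorm_sq (R : realType) n (x : 'rV[R]_n) :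
  enorm x ^+ 2 = \sum_(i < n) x ord0 i ^+ 2.
Proof. by rewrite /enorm sqr_sqrtr // sumr_ge0 // => i _; exact: sqr_ge0. Qed.

Lemma coord_le (R : realType) n (x : 'rV[R]_n) i : `|x ord0 i| <= enorm x.
Proof.
rewrite -ler_sqr ?nnegrE ?enorm_ge0 // enorm_sq real_normK ?num_real //.
rewrite (bigD1 i) //= lerDl sumr_ge0 // => j _; exact: sqr_ge0.
Qed.

Lemma cauchy_schwarz (R : realType) n (x y : 'I_n -> R) :
  (\sum_i x i * y i) ^+ 2 <= (\sum_i x i ^+ 2) * (\sum_i y i ^+ 2).
Proof.
have H : 0 <= \sum_i \sum_j (x i * y j - x j * y i) ^+ 2.
  by apply: sumr_ge0 => i _; apply: sumr_ge0 => j _; exact: sqr_ge0.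
have E : \sum_i \sum_j (x i * y j - x j * y i) ^+ 2 =
  2 * ((\sum_i x i ^+ 2) * (\sum_i y i ^+ 2)) - 2 * (\sum_i x i * y i) ^+ 2.
  have E1 : forall i j, (x i * y j - x j * y i) ^+ 2 =
     x i ^+ 2 * y j ^+ 2 + x j ^+ 2 * y i ^+ 2 - 2 * ((x i * y i) * (x j * y j)).
    by move=> i j; ring.
  under eq_bigr do under eq_bigr do rewrite E1.
  rewrite (eq_bigr (fun i => \sum_j x i ^+ 2 * y j ^+ 2 + \sum_j x j ^+ 2 * y i ^+ 2 - \sum_j 2 * ((x i * y i) * (x j * y j)))); last by move=> i _; rewrite sumrB big_split.
  rewrite sumrB big_split /=.
  have -> : \sum_i \sum_j x j ^+ 2 * y i ^+ 2 = \sum_i \sum_j x i ^+ 2 * y j ^+ 2.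
    by rewrite exchange_big.
  rewrite expr2 !mulr_suml.
  have -> : \sum_i \sum_j 2 * (x i * y i * (x j * y j)) =
    2 * \sum_i (x i * y i * \sum_j x j * y j).
    by rewrite mulr_sumr; apply: eq_bigr => i _; rewrite mulr_sumr mulr_sumr.
  have -> : \sum_i \sum_j x i ^+ 2 * y j ^+ 2 = \sum_i x i ^+ 2 * \sum_j y j ^+ 2.
    by apply: eq_bigr => i _; rewrite mulr_sumr.
  ring.
lra.
Qed.
Lemma enorm_triangle (R : realType) n (x y : 'rV[R]_n) :
  enorm (x + y) <= enorm x + enorm y.
Proof.
rewrite -ler_sqr ?nnegrE ?addr_ge0 ?enorm_ge0 //.
have cs := cauchy_schwarz (fun i => x ord0 i) (fun i => y ord0 i).
have h1 : \sum_i x ord0 i * y ord0 i <= enorm x * enorm y.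
  apply: (le_trans (ler_norm _)).
  rewrite -sqrtr_sqr /enorm -sqrtrM ?sumr_ge0 // => [|i _]; last exact: sqr_ge0.
  by rewrite ler_sqrt // mulr_ge0 // sumr_ge0 // => i _; exact: sqr_ge0.
have -> : enorm (x + y) ^+ 2 = enorm x ^+ 2 + enorm y ^+ 2
   + 2 * \sum_i x ord0 i * y ord0 i.
  rewrite !enorm_sq mulr_sumr -!big_split /=; apply: eq_bigr => i _.
  rewrite !mxE; ring.
lra.
Qed.

Lemma enormN (R : realType) n (x : 'rV[R]_n) : enorm (- x) = enorm x.
Proof. by rewrite /enorm; congr Num.sqrt; apply: eq_bigr => i _; rewrite mxE sqrrN. Qed.

Lemma enormB (R : realType) n (x y : 'rV[R]_n) : enorm (x - y) = enorm (y - x).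
Proof. by rewrite -enormN opprB. Qed.

Lemma enorm_le_sum (R : realType) n (x : 'rV[R]_n) :
  enorm x <= \sum_i `|x ord0 i|.
Proof.
rewrite -ler_sqr ?nnegrE ?enorm_ge0 ?sumr_ge0 // enorm_sq.
rewrite expr2 mulr_suml; apply: ler_sum => i _.
rewrite -real_normK ?num_real // expr2 ler_wpM2l //.
by rewrite (bigD1 i) //= lerDl sumr_ge0.
Qed.
Lemma expR_lip0 (R : realType) (u v : R) : u <= v ->
  `|expR u - expR v| <= `|u - v| * (expR u + expR v).
Proof.
move=> uv.
have h1 : expR u <= expR v by rewrite ler_expR.
rewrite distrC ger0_norm ?subr_ge0 // distrC ger0_norm ?subr_ge0 //.
have h2 : 1 + (u - v) <= expR (u - v) by exact: expR_ge1Dx.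
have h3 : expR u = expR (u - v) * expR v by rewrite -expRD subrK.
have h4 : 0 < expR v by exact: expR_gt0.
have h5 : 0 <= v - u by rewrite subr_ge0.
apply: (@le_trans _ _ ((v - u) * expR v)); last first.
  by rewrite ler_wpM2l // lerDr expR_ge0.
rewrite h3; nra.
Qed.

Lemma expR_lip (R : realType) (u v : R) :
  `|expR u - expR v| <= `|u - v| * (expR u + expR v).
Proof.
case/orP: (le_total u v) => [/expR_lip0 //|/expR_lip0].
by move=> h; rewrite distrC (distrC u) [expR u + _]addrC.
Qed.

Lemma wbound_real (R : realType) (a c Rl t e : R) :
  0 < a -> 0 < c -> 0 <= t -> 0 <= e -> (Rl < t -> a * c * t ^+ 2 <= e) ->
  (1 + t) ^+ 2 * expR (- e) <= (1 + Rl) ^+ 2 + 2 + 2 / (a * c).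
Proof.
move=> ha hc ht he H.
have ac : 0 < a * c by exact: mulr_gt0.
have eg : 0 < expR (- e) by exact: expR_gt0.
have e1 : expR (- e) <= 1 by rewrite expR_le1 lerNl oppr0.
have pos : 0 <= 2 / (a * c) by rewrite divr_ge0 // ltW.
case: (lerP t Rl) => tR.
  have : (1 + t) ^+ 2 <= (1 + Rl) ^+ 2.
    by rewrite ler_sqr ?nnegrE ?lerD2l //; lra.
  nra.
have h := H tR.
have h2 : 1 + e <= expR e by exact: expR_ge1Dx.
have h3 : expR (- e) * expR e = 1 by rewrite -expRD addNr expR0.
have h4 : (1 + t) ^+ 2 <= 2 + 2 * t ^+ 2.
  have := sqr_ge0 (1 - t); rewrite !expr2; nra.
have h5 : 2 + 2 * t ^+ 2 <= (2 + 2 / (a * c)) * (1 + a * c * t ^+ 2).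
  have : 2 / (a * c) * (a * c) = 2 by rewrite mulfVK // gt_eqF.
  nra.
have h6 : expR (- e) * (1 + a * c * t ^+ 2) <= 1 by nra.
have h7 : (1 + t) ^+ 2 * expR (- e) <= 2 + 2 / (a * c).
  have : 0 <= 2 + 2 / (a * c) by lra.
  nra.
have : 0 <= (1 + Rl) ^+ 2 by exact: sqr_ge0.
lra.
Qed.
Lemma lip_real (R : realType) (a b dl wx wy M k xi yi : R) :
  0 <= a -> 0 <= b -> 0 <= dl -> b <= a + dl -> a <= b + dl ->
  0 <= wx -> 0 <= wy -> (1 + a) ^+ 2 * wx <= M -> (1 + b) ^+ 2 * wy <= M ->
  0 <= k ->
  `|wx - wy| <= k * (1 + a + b) * dl * (wx + wy) ->
  `|xi| <= a -> `|yi| <= b -> `|xi - yi| <= dl ->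
  `|wx - wy| <= 4 * M * (1 + k) * dl /\
  `|xi * wx - yi * wy| <= 4 * M * (1 + k) * dl.
Proof.
move=> a0 b0 d0 ba ab wx0 wy0 hMx hMy k0 hw hxi hyi hd.
have ax1 : (1 + a) * wx <= M.
  apply: le_trans hMx; rewrite expr2 -mulrA ler_peMl //; last lra.
  by rewrite mulr_ge0 //; lra.
have by1 : (1 + b) * wy <= M.
  apply: le_trans hMy; rewrite expr2 -mulrA ler_peMl //; last lra.
  by rewrite mulr_ge0 //; lra.
have M0 : 0 <= M by apply: le_trans ax1; rewrite mulr_ge0 //; lra.
have hx2 : `|xi * wx - yi * wy| <= `|xi - yi| * wx + `|yi| * `|wx - wy|.
  have -> : xi * wx - yi * wy = (xi - yi) * wx + yi * (wx - wy) by ring.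
  by rewrite (le_trans (ler_normD _ _)) // !normrM (ger0_norm wx0).
have nxi := normr_ge0 xi; have nyi := normr_ge0 yi.
have nw := normr_ge0 (wx - wy).
have wxM : wx <= M by nra.
have wyM : wy <= M by nra.
have axM : a * wx <= M by nra.
have byM : b * wy <= M by nra.
case: (lerP 1 dl) => d1.
  have MM : 2 * M <= 4 * M * (1 + k) * dl.
    have : 1 <= 2 * (1 + k) * dl by nra.
    nra.
  have hw2 : `|wx - wy| <= wx + wy.
    by rewrite (le_trans (ler_normB _ _)) // !ger0_norm.
  split; first nra.
  have : `|xi * wx - yi * wy| <= a * wx + b * wy.
    rewrite (le_trans (ler_normB _ _)) // !normrM !(ger0_norm wx0) !(ger0_norm wy0).
    by rewrite lerD // ler_wpM2r.
  nra.
have e1 : (1 + a + b) * wx <= 2 * M by nra.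
have e2 : (1 + a + b) * wy <= 2 * M by nra.
have hw3 : `|wx - wy| <= 4 * k * M * dl.
  apply: (le_trans hw).
  have : k * dl * ((1 + a + b) * wx + (1 + a + b) * wy) <= k * dl * (4 * M).
    by rewrite ler_wpM2l ?mulr_ge0 //; lra.
  nra.
split; first nra.
have f1 : b * (1 + a + b) * wx <= 2 * M.
  have : b * (1 + a + b) <= (1 + a) ^+ 2 * 2 by nra.
  nra.
have f2 : b * (1 + a + b) * wy <= 2 * M.
  have : b * (1 + a + b) <= (1 + b) ^+ 2 * 2 by nra.
  nra.
have f3 : `|yi| * `|wx - wy| <= 4 * k * M * dl.
  apply: (le_trans (ler_wpM2r nw hyi)).
  apply: (le_trans (ler_wpM2l b0 hw)).
  have : k * dl * (b * (1 + a + b) * wx + b * (1 + a + b) * wy) <= k * dl * (4 * M).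
    by rewrite ler_wpM2l ?mulr_ge0 //; lra.
  nra.
have f4 : `|xi - yi| * wx <= dl * M.
  have : wx <= M by nra.
  nra.
nra.
Qed.
Lemma cont_meas (R : realType) n (f : 'rV[R]_n -> R) :
  continuous f -> measurable_fun [set: Rd R n] (f : Rd R n -> R).
Proof.
move=> /continuousP cf; apply: (measurability _ (measurable_realfun.RGenOpens.measurableE R)).
move=> _ [_ [a [b ->] <-]]; rewrite setTI.
apply: sub_sigma_algebra; exact/cf/interval_open.
Qed.

Lemma mxcoord_le (R : realType) n (v : 'rV[R]_n) i : `|v ord0 i| <= `|v|.
Proof.
have /mapP[j Hj ->] : `|v ord0 i| \in [seq `|v x.1 x.2| | x : 'I_1 * 'I_n].
  by apply/mapP; exists (ord0, i) => //=; rewrite mem_enum.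
by rewrite [leRHS]/Num.Def.normr /= mx_normrE; apply/bigmax_geP; right => /=; exists j.
Qed.

Lemma enorm_le_mx (R : realType) n (v : 'rV[R]_n) : enorm v <= n%:R * `|v|.
Proof.
apply: (le_trans (enorm_le_sum v)).
apply: (@le_trans _ _ (\sum_(i < n) `|v|)); first by apply: ler_sum => i _; exact: mxcoord_le.
by rewrite sumr_const card_ord mulr_natl.
Qed.

Lemma cont_of_loclip (R : realType) n (f : 'rV[R]_n -> R) (C : 'rV[R]_n -> R) :
  (forall x t, `|x - t| < 1 -> `|f x - f t| <= C x * `|x - t|) -> continuous f.
Proof.
move=> H x; apply/(@cvgrPdist_lt _ _ _ (nbhs x) (nbhs_filter x)) => e e0.
have Cp : 0 < `|C x| + 1 by rewrite ltr_wpDl.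
have dp : 0 < Num.min 1 (e / (`|C x| + 1)) by rewrite lt_min ltr01 divr_gt0.
near=> t.
have ht : `|x - t| < Num.min 1 (e / (`|C x| + 1)).
  near: t; exact: (@cvgr_dist_lt _ _ _ (nbhs x) _ id x cvg_id _ dp).
move: ht; rewrite lt_min => /andP[h1 h2].
apply: (le_lt_trans (H x t h1)).
have n0 := normr_ge0 (x - t).
apply: (@le_lt_trans _ _ ((`|C x| + 1) * `|x - t|)).
  apply: (le_trans (ler_norm _)); rewrite normrM normr_id ler_wpM2r //.
  by rewrite lerDl.
by rewrite mulrC -ltr_pdivlMr.
Unshelve. all: by end_near.
Qed.

Lemma coord_meas (R : realType) n i :
  measurable_fun [set: Rd R n] (fun x : Rd R n => x ord0 i).
Proof. by apply: cont_meas; exact: coord_continuous. Qed.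

Lemma enorm_cont (R : realType) n : continuous (@enorm R n).
Proof.
apply: (@cont_of_loclip _ _ _ (fun _ => n%:R)) => x t _.
have h1 := enorm_triangle (x - t) t; rewrite subrK in h1.
have h2 := enorm_triangle (t - x) x; rewrite subrK enormB in h2.
apply: (le_trans _ (enorm_le_mx (x - t))).
by rewrite ler_norml; apply/andP; split; lra.
Qed.
Lemma bdd_int d (T : measurableType d) (R : realType) (mu : probability T R)
  (g : T -> R) (B : R) :
  measurable_fun setT g -> (forall x, `|g x| <= B) -> mu.-integrable setT (EFin \o g).
Proof.
move=> mg hB; apply/integrableP; split; first exact/measurable_EFinP.
have B0 : 0 <= B by apply: le_trans (hB point); exact: normr_ge0.
apply: (@le_lt_trans _ _ (B%:E * mu setT)%E).
  apply: integral_le_bound => //; first exact/measurable_EFinP.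
  by apply: aeW => x _ /=; rewrite lee_fin.
by rewrite probability_setT mule1 ltry.
Qed.

Lemma marg1 (R : realType) n (mu nu : probability (Rd R n) R) pi
  (g : Rd R n -> R) (B : R) : coupling mu nu pi ->
  measurable_fun setT g -> (forall x, `|g x| <= B) ->
  Rintegral pi setT (fun z => g z.1) = Rintegral mu setT g.
Proof.
move=> [h1 h2] mg hB; rewrite /Rintegral; congr fine.
have mf : measurable_fun [set: Rd R n * Rd R n] fst := measurable_fst.
transitivity (\int[pushforward pi fst]_(x in setT) (g x)%:E)%E.
  rewrite integral_pushforward //.
  - exact/measurable_EFinP.
  - rewrite preimage_setT; apply: (@bdd_int _ _ _ pi (fun z => g z.1) B) => //.
    exact: measurableT_comp.
apply: eq_measure_integral => A mA _; exact: h1.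
Qed.
Lemma marg2 (R : realType) n (mu nu : probability (Rd R n) R) pi
  (g : Rd R n -> R) (B : R) : coupling mu nu pi ->
  measurable_fun setT g -> (forall x, `|g x| <= B) ->
  Rintegral pi setT (fun z => g z.2) = Rintegral nu setT g.
Proof.
move=> [h1 h2] mg hB; rewrite /Rintegral; congr fine.
have mf : measurable_fun [set: Rd R n * Rd R n] snd := measurable_snd.
transitivity (\int[pushforward pi snd]_(x in setT) (g x)%:E)%E.
  rewrite integral_pushforward //.
  - exact/measurable_EFinP.
  - rewrite preimage_setT; apply: (@bdd_int _ _ _ pi (fun z => g z.2) B) => //.
    exact: measurableT_comp.
apply: eq_measure_integral => A mA _; exact: h2.
Qed.

Lemma dist_meas (R : realType) n :
  measurable_fun [set: Rd R n * Rd R n] (fun z => enorm (z.1 - z.2)).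
Proof.
have -> : (fun z : Rd R n * Rd R n => enorm (z.1 - z.2)) =
  Num.sqrt \o (fun z : Rd R n * Rd R n => \sum_(i < n) (z.1 ord0 i - z.2 ord0 i) ^+ 2).
  apply/funext => z /=; rewrite /enorm; congr Num.sqrt.
  by apply: eq_bigr => i _; rewrite !mxE.
apply: measurableT_comp; first exact: continuous_measurable_fun (@sqrt_continuous R).
apply: measurable_sum => i; apply: measurable_funX; apply: measurable_funB.
- exact: (measurableT_comp (coord_meas i) measurable_fst).
- exact: (measurableT_comp (coord_meas i) measurable_snd).
Qed.

Lemma diff_bound (R : realType) n (mu nu : probability (Rd R n) R) pi
  (g : Rd R n -> R) (B L D : R) : coupling mu nu pi ->
  measurable_fun setT g -> (forall x, `|g x| <= B) -> 0 <= L ->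
  (forall x y, `|g x - g y| <= L * enorm (x - y)) ->
  (\int[pi]_z (enorm (z.1 - z.2))%:E)%E = D%:E ->
  `|Rintegral mu setT g - Rintegral nu setT g| <= L * D.
Proof.
move=> hc mg hB L0 hL hD.
have m1 : measurable_fun [set: Rd R n * Rd R n] (fun z => g z.1).
  exact: measurableT_comp.
have m2 : measurable_fun [set: Rd R n * Rd R n] (fun z => g z.2).
  exact: measurableT_comp.
have i1 := @bdd_int _ _ _ pi (fun z => g z.1) B m1 (fun z => hB _).
have i2 := @bdd_int _ _ _ pi (fun z => g z.2) B m2 (fun z => hB _).
have i12 : pi.-integrable setT (EFin \o (fun z : Rd R n * Rd R n => g z.1 - g z.2)).
  apply: (@bdd_int _ _ _ pi _ (B + B)); first exact: measurable_funB.
  by move=> z; apply: (le_trans (ler_normB _ _)); apply: lerD.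
have me := @dist_meas R n.
have ie : pi.-integrable setT (EFin \o (fun z : Rd R n * Rd R n => L * enorm (z.1 - z.2))).
  apply/integrableP; split.
    by apply/measurable_EFinP; apply: measurable_funM => //; exact: measurable_cst.
  have -> : (\int[pi]_(x in setT) `|(EFin \o (fun z : Rd R n * Rd R n => (L * enorm (z.1 - z.2))%R)) x|)%E = (L%:E * D%:E)%E.
    transitivity (\int[pi]_(z in setT) (L%:E * (enorm (z.1 - z.2))%:E))%E.
      by apply: eq_integral => z _ /=; rewrite ger0_norm ?mulr_ge0 ?enorm_ge0 // EFinM.
    rewrite ge0_integralZl ?hD //.
    - exact/measurable_EFinP.
    - by move=> z _; rewrite lee_fin enorm_ge0.
  by rewrite -EFinM ltry.
rewrite -(marg1 hc mg hB) -(marg2 hc mg hB) -RintegralB //.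
apply: (le_trans (le_normr_Rintegral _ _)) => //.
apply: (@le_trans _ _ (Rintegral pi setT (fun z => L * enorm (z.1 - z.2)))).
  apply: le_Rintegral => //.
    apply: (@bdd_int _ _ _ pi _ (B + B)).
      exact: (measurableT_comp (@normr_measurable R setT) (measurable_funB m1 m2)).
    by move=> z; rewrite normr_id; apply: (le_trans (ler_normB _ _)); apply: lerD.
rewrite RintegralZl //; last first.
  apply/integrableP; split; first exact/measurable_EFinP.
  under eq_integral do rewrite /= ger0_norm ?enorm_ge0 //.
  by rewrite hD ltry.
by rewrite /Rintegral hD.
Qed.
Lemma quot_bound (R : realType) (N1 N2 Z1 Z2 z0 M e1 e2 : R) :
  0 < z0 -> z0 <= Z1 -> z0 <= Z2 -> `|N2| <= M -> `|N1 - N2| <= e1 ->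
  `|Z1 - Z2| <= e2 ->
  `|Z1^-1 * N1 - Z2^-1 * N2| <= e1 / z0 + M * e2 / (z0 ^+ 2).
Proof.
move=> z0p h1 h2 hN hd1 hd2.
have Z1p : 0 < Z1 by apply: lt_le_trans h1.
have Z2p : 0 < Z2 by apply: lt_le_trans h2.
have -> : Z1^-1 * N1 - Z2^-1 * N2 = (N1 - N2) / Z1 + N2 * (Z2 - Z1) / (Z1 * Z2).
  have n1 : Z1 != 0 by rewrite gt_eqF.
  have n2 : Z2 != 0 by rewrite gt_eqF.
  by field; rewrite n1 n2.
apply: (le_trans (ler_normD _ _)); apply: lerD.
  rewrite normrM normfV (gtr0_norm Z1p).
  apply: (@le_trans _ _ (e1 / Z1)); first by rewrite ler_wpM2r // invr_ge0 ltW.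
  rewrite ler_wpM2l ?lef_pV2 ?posrE //; apply: le_trans hd1; exact: normr_ge0.
rewrite !normrM normfV (gtr0_norm (mulr_gt0 Z1p Z2p)) distrC.
have e20 : 0 <= e2 by apply: le_trans hd2; exact: normr_ge0.
have M0 : 0 <= M by apply: le_trans hN; exact: normr_ge0.
apply: (@le_trans _ _ (M * e2 / (Z1 * Z2))).
  rewrite ler_wpM2r //; first by rewrite invr_ge0 mulr_ge0 // ltW.
  by apply: ler_pM => //; exact: normr_ge0.
rewrite ler_wpM2l ?mulr_ge0 // lef_pV2 ?posrE ?mulr_gt0 ?exprn_gt0 //.
by rewrite expr2 ler_pM // ltW.
Qed.

Lemma bdd_Rint d (T : measurableType d) (R : realType) (mu : probability T R)
  (g : T -> R) (B : R) :
  measurable_fun setT g -> (forall x, `|g x| <= B) -> `|Rintegral mu setT g| <= B.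
Proof.
move=> mg hB.
have B0 : 0 <= B by apply: le_trans (hB point); exact: normr_ge0.
apply: (le_trans (le_normr_Rintegral _ _)) => //; first exact: bdd_int hB.
apply: (@le_trans _ _ (Rintegral mu setT (fun _ => B))).
  apply: le_Rintegral => //.
  - apply: (@bdd_int _ _ _ mu _ B) => //.
      exact: (measurableT_comp (@normr_measurable R setT) mg).
    by move=> x; rewrite normr_id.
  - by apply: (@bdd_int _ _ _ mu _ B) => // x; rewrite ger0_norm.
rewrite Rintegral_cst // (_ : fine _ = 1) ?mulr1 //; exact: (congr1 fine (probability_setT mu)).
Qed.
Lemma e4_meas (R : realType) n :
  measurable_fun [set: Rd R n] (fun x : Rd R n => enorm x ^+ 4).
Proof. by apply: measurable_funX; apply: cont_meas; exact: enorm_cont. Qed.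

Lemma e4_int (R : realType) n (mu : probability (Rd R n) R) (K : R) :
  (moment4 mu <= K%:E)%E ->
  mu.-integrable setT (EFin \o (fun x : Rd R n => enorm x ^+ 4)) /\
  Rintegral mu setT (fun x : Rd R n => enorm x ^+ 4) <= K.
Proof.
move=> hm.
have m0 : (0 <= moment4 mu)%E.
  by apply: integral_ge0 => x _; rewrite lee_fin exprn_ge0 // enorm_ge0.
have fm : moment4 mu \is a fin_num by rewrite ge0_fin_numE // (le_lt_trans hm) ?ltry.
split.
  apply/integrableP; split; first by apply/measurable_EFinP; exact: e4_meas.
  under eq_integral do rewrite /= ger0_norm ?exprn_ge0 ?enorm_ge0 //.
  by apply: (le_lt_trans hm); rewrite ltry.
rewrite /Rintegral -/(moment4 mu).
by move: hm fm; case: (moment4 mu) => // r; rewrite lee_fin.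
Qed.

Lemma Zlow (R : realType) n (mu : probability (Rd R n) R) (w : Rd R n -> R)
  (B c1 c2 K : R) : (moment4 mu <= K%:E)%E ->
  measurable_fun setT w -> (forall x, `|w x| <= B) -> 0 <= c2 ->
  (forall x, c1 - c2 * enorm x ^+ 4 <= w x) ->
  c1 - c2 * K <= Rintegral mu setT w.
Proof.
move=> hm mw hB c20 hw.
have [i4 r4] := e4_int hm.
have ic : mu.-integrable setT (EFin \o (fun _ : Rd R n => c1)).
  apply: (@bdd_int _ _ _ mu _ `|c1|) => //; exact: measurable_cst.
have iz : mu.-integrable setT (EFin \o (fun x : Rd R n => c2 * enorm x ^+ 4)).
  apply: (eq_integrable measurableT _ _ _ (integrableZl measurableT c2 i4)) => x _ /=; by rewrite EFinM.
have ih : mu.-integrable setT (EFin \o (fun x : Rd R n => c1 - c2 * enorm x ^+ 4)).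
  apply: (eq_integrable measurableT _ _ _ (integrableB measurableT ic iz)) => x _ /=; by rewrite EFinB.
apply: (@le_trans _ _ (Rintegral mu setT (fun x => c1 - c2 * enorm x ^+ 4))).
  rewrite RintegralB // Rintegral_cst // RintegralZl //.
  rewrite (_ : fine _ = 1); last exact: (congr1 fine (probability_setT mu)).
  by rewrite mulr1 lerD2l lerN2 ler_wpM2l.
apply: le_Rintegral => //; exact: bdd_int hB.
Qed.
Lemma wbounds (R : realType) (t w M a : R) : 0 <= t -> 0 <= w ->
  (1 + t) ^+ 2 * w <= M -> `|a| <= t -> `|w| <= M /\ `|a * w| <= M.
Proof.
move=> t0 w0 hM ha; rewrite ger0_norm // normrM (ger0_norm w0).
have na := normr_ge0 a.
split; nra.
Qed.

Lemma sq_le4 (R : realType) (t : R) : t ^+ 2 <= 1 + t ^+ 4.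
Proof.
have := sqr_ge0 (t ^+ 2 - 1); have := sqr_ge0 t.
rewrite !expr2 => h1 h2.
have -> : t ^+ 4 = t * t * (t * t) by rewrite -!expr2 -exprM.
nra.
Qed.

Unset Implicit Arguments.

Theorem lemma3p3 (R : realType) (d : nat) (F : 'rV[R]_d -> R)
  (xstar : 'rV[R]_d) (hxstar : forall x, F xstar <= F x)
  (A1 : exists m : R, forall x, m <= F x)
  (LF cu cl Rl : R) (hLF : 0 < LF) (hcu : 0 < cu) (hcl : 0 < cl) (hRl : 0 < Rl)
  (Hlip : forall x y : 'rV[R]_d,
     `|F x - F y| <= LF * (1 + enorm x + enorm y) * enorm (x - y))
  (Hup : forall x : 'rV[R]_d, F x - F xstar <= cu * (1 + enorm x ^+ 2))
  (Hlow : forall x : 'rV[R]_d, Rl < enorm x ->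
     cl * enorm x ^+ 2 <= F x - F xstar)
  (alpha K : R) (halpha : 0 < alpha) (hK : 0 < K) :
  exists C0 : R, 0 < C0 /\
    forall mu muh : probability (Rd R d) R,
      (moment4 mu <= K%:E)%E -> (moment4 muh <= K%:E)%E ->
      ((enorm (Xalpha alpha F mu - Xalpha alpha F muh))%:E
         <= C0%:E * W1 mu muh)%E.
Proof.
set Fs := F xstar.
set E := expR (- (alpha * Fs)).
have E0 : 0 < E := expR_gt0 _.
set M := E * ((1 + Rl) ^+ 2 + 2 + 2 / (alpha * cl)).
have wE : forall x, omega alpha F x = E * expR (- (alpha * (F x - Fs))).
  by move=> x; rewrite /omega /E -expRD; congr expR; ring.
have hw : forall x, (1 + enorm x) ^+ 2 * omega alpha F x <= M.
  move=> x; rewrite wE /M.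
  have := @wbound_real R alpha cl Rl (enorm x) (alpha * (F x - Fs)) halpha hcl
    (enorm_ge0 x).
  have e0 : 0 <= alpha * (F x - Fs).
    by apply: mulr_ge0; [exact: ltW | rewrite subr_ge0; exact: hxstar].
  move=> /(_ e0) H.
  have : (1 + enorm x) ^+ 2 * expR (- (alpha * (F x - Fs))) <=
      (1 + Rl) ^+ 2 + 2 + 2 / (alpha * cl).
    apply: H => hx; rewrite -mulrA; apply: ler_wpM2l; [exact: ltW | exact: Hlow].
  by move=> h; rewrite mulrCA; apply: ler_wpM2l => //; exact: ltW.
have w0 : forall x, 0 < omega alpha F x by move=> x; exact: expR_gt0.
have wM : forall x, `|omega alpha F x| <= M.
  by move=> x; have [] := wbounds (a:=0) (enorm_ge0 x) (ltW (w0 x)) (hw x); rewrite ?normr0 ?enorm_ge0.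
have xwM : forall (x : 'rV[R]_d) i, `|x ord0 i * omega alpha F x| <= M.
  by move=> x i; have [] := wbounds (enorm_ge0 x) (ltW (w0 x)) (hw x) (coord_le x i).
have Fcont : continuous F.
  apply: (@cont_of_loclip R d F (fun x => LF * (1 + 2 * enorm x + d%:R) * d%:R)).
  move=> x t hxt.
  apply: (le_trans (Hlip x t)).
  have h1 := enorm_le_mx (x - t).
  have h2 := enorm_triangle x (t - x); rewrite addrC subrK enormB in h2.
  have n0 := normr_ge0 (x - t).
  have ex := enorm_ge0 x; have et := enorm_ge0 t; have ed := enorm_ge0 (x - t).
  have dn : 0 <= d%:R :> R by exact: ler0n.
  have h3 : 1 + enorm x + enorm t <= 1 + 2 * enorm x + d%:R by nra.
  have h4 : 0 <= LF * (1 + enorm x + enorm t) by apply: mulr_ge0; lra.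
  apply: (@le_trans _ _ (LF * (1 + enorm x + enorm t) * (d%:R * `|x - t|))).
    exact: ler_wpM2l.
  rewrite mulrA; apply: ler_wpM2r => //; rewrite ler_wpM2r //; apply: ler_wpM2l; lra.
have Fmeas : measurable_fun [set: Rd R d] (F : Rd R d -> R) := cont_meas Fcont.
have wmeas : measurable_fun [set: Rd R d] (omega alpha F : Rd R d -> R).
  rewrite /omega; apply: (measurableT_comp (@measurable_expR R)).
  apply: measurable_funN; apply: measurable_funM => //; exact: measurable_cst.
have xwmeas : forall i, measurable_fun [set: Rd R d]
    (fun x : Rd R d => x ord0 i * omega alpha F x).
  by move=> i; apply: measurable_funM => //; exact: coord_meas.
set L := 4 * M * (1 + alpha * LF).
have LR : forall (x y : 'rV[R]_d) xi yi, `|xi| <= enorm x -> `|yi| <= enorm y ->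
    `|xi - yi| <= enorm (x - y) ->
    `|omega alpha F x - omega alpha F y| <= L * enorm (x - y) /\
    `|xi * omega alpha F x - yi * omega alpha F y| <= L * enorm (x - y).
  move=> x y xi yi hx hy hxy.
  rewrite /L.
  apply: (@lip_real R (enorm x) (enorm y) (enorm (x - y)) (omega alpha F x) (omega alpha F y) M (alpha*LF) xi yi) => //.
  - exact: enorm_ge0.
  - exact: enorm_ge0.
  - exact: enorm_ge0.
  - by have := enorm_triangle x (y - x); rewrite addrC subrK enormB.
  - by have := enorm_triangle y (x - y); rewrite addrC subrK.
  - exact: ltW.
  - exact: ltW.
  - by apply: mulr_ge0; apply: ltW.
  - apply: (le_trans (expR_lip _ _)).
    apply: ler_wpM2r; first by rewrite addr_ge0 ?expR_ge0.
    have -> : - (alpha * F x) - - (alpha * F y) = - (alpha * (F x - F y)) by ring.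
    rewrite normrN normrM (gtr0_norm halpha) -!mulrA.
    by apply: ler_wpM2l; [exact: ltW | rewrite mulrA; exact: Hlip].
have M0 : 0 <= M by apply: le_trans (wM xstar); exact: normr_ge0.
have L0 : 0 <= L.
  rewrite /L; apply: mulr_ge0; first by apply: mulr_ge0.
  have := mulr_gt0 halpha hLF; lra.
have lipw : forall x y : 'rV[R]_d,
    `|omega alpha F x - omega alpha F y| <= L * enorm (x - y).
  move=> x y; have := LR x y 0 0; rewrite subr0 !normr0 => H.
  by case: (H (enorm_ge0 x) (enorm_ge0 y) (enorm_ge0 _)).
have lipx : forall (x y : 'rV[R]_d) i,
    `|x ord0 i * omega alpha F x - y ord0 i * omega alpha F y| <= L * enorm (x - y).
  move=> x y i.
  have h3 : `|x ord0 i - y ord0 i| <= enorm (x - y).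
    by have := coord_le (x - y) i; rewrite !mxE.
  by case: (LR x y _ _ (coord_le x i) (coord_le y i) h3).
set b := alpha * cu * (2 + K).
set z0 := E * expR (- b).
have z0p : 0 < z0 by rewrite mulr_gt0 ?expR_gt0.
have c20 : 0 <= z0 * (alpha * cu).
  by apply: mulr_ge0; [exact: ltW | apply: mulr_ge0; exact: ltW].
have hpt : forall x : Rd R d, z0 * (1 + b - alpha * cu * 2) - z0 * (alpha * cu) * enorm x ^+ 4
    <= omega alpha F x.
  move=> x; rewrite wE.
  set a := alpha * (F x - Fs).
  have h1 : 1 + (b - a) <= expR (b - a) by exact: expR_ge1Dx.
  have h2 : expR (- a) = expR (- b) * expR (b - a) by rewrite -expRD; congr expR; ring.
  have h3 : a <= alpha * cu * (2 + enorm x ^+ 4).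
    rewrite /a -mulrA; apply: ler_wpM2l; first exact: ltW.
    apply: (le_trans (Hup x)); apply: ler_wpM2l; first exact: ltW.
    have := sq_le4 (enorm x); lra.
  have eb := expR_gt0 (- b).
  have : expR (- b) * (1 + b - alpha * cu * 2 - alpha * cu * enorm x ^+ 4) <= expR (- a).
    rewrite h2; apply: ler_wpM2l; first exact: ltW.
    apply: le_trans h1; lra.
  move=> h.
  have -> : z0 * (1 + b - alpha * cu * 2) - z0 * (alpha * cu) * enorm x ^+ 4 =
    E * (expR (- b) * (1 + b - alpha * cu * 2 - alpha * cu * enorm x ^+ 4)).
    by rewrite /z0; ring.
  by apply: ler_wpM2l => //; exact: ltW.
set C0 := d%:R * L * (z0^-1 + M / z0 ^+ 2) + 1.
have C00 : 0 <= d%:R * L * (z0^-1 + M / z0 ^+ 2).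
  apply: mulr_ge0; first by apply: mulr_ge0 => //; exact: ler0n.
  by apply: addr_ge0; rewrite ?invr_ge0 ?divr_ge0 ?exprn_ge0 // ltW.
exists C0; split; first by rewrite /C0; lra.
move=> mu muh hm1 hm2.
have Zb : forall nu : probability (Rd R d) R, (moment4 nu <= K%:E)%E ->
    z0 <= Rintegral nu setT (omega alpha F).
  move=> nu hm.
  have Zl := Zlow hm wmeas wM c20 hpt.
  have e : z0 * (1 + b - alpha * cu * 2) - z0 * (alpha * cu) * K = z0.
    rewrite /b. clearbody z0. ring.
  by rewrite e in Zl.
have Z1 := Zb mu hm1; have Z2 := Zb muh hm2.
have C0p : 0 < C0 by rewrite /C0; lra.
set e := enorm (Xalpha alpha F mu - Xalpha alpha F muh).
have -> : e%:E = (C0%:E * (e / C0)%:E)%E.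
  by rewrite -EFinM mulrC divfK // gt_eqF.
apply: lee_wpmul2l; first by rewrite lee_fin ltW.
apply: le_ereal_inf_tmp => c [pi [hc ->]].
have c0 : (0 <= \int[pi]_z (enorm (z.1 - z.2))%:E)%E.
  by apply: integral_ge0 => z _; rewrite lee_fin enorm_ge0.
move: c0; case hD : (\int[pi]_z (enorm (z.1 - z.2))%:E)%E => [D| |] c0 //;
  last by rewrite leey.
rewrite lee_fin in c0; rewrite lee_fin ler_pdivrMr // [D * C0]mulrC.
have hZ := diff_bound hc wmeas wM L0 lipw hD.
have hN : forall i, `|Rintegral mu setT (fun x => x ord0 i * omega alpha F x) -
    Rintegral muh setT (fun x => x ord0 i * omega alpha F x)| <= L * D.
  move=> i; apply: (diff_bound hc (xwmeas i) (fun x => xwM x i) L0 _ hD).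
  by move=> x y; exact: lipx.
have hN2 : forall i, `|Rintegral muh setT (fun x => x ord0 i * omega alpha F x)| <= M.
  by move=> i; apply: bdd_Rint (xwmeas i) (fun x => xwM x i).
apply: (le_trans (enorm_le_sum _)).
apply: (@le_trans _ _ (\sum_(i < d) (L * D / z0 + M * (L * D) / z0 ^+ 2))).
  apply: ler_sum => i _; rewrite !mxE.
  exact: quot_bound z0p Z1 Z2 (hN2 i) (hN i) hZ.
rewrite sumr_const card_ord -mulr_natl /C0.
have LD : 0 <= L * D by exact: mulr_ge0.
have -> : L * D / z0 + M * (L * D) / z0 ^+ 2 = L * (z0^-1 + M / z0 ^+ 2) * D.
  by rewrite /z0; field; rewrite ?gt_eqF ?mulr_gt0 ?expR_gt0.
rewrite mulrDl mul1r mulrA -[X in X <= _]addr0 lerD //.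
by rewrite !mulrA.
Qed.
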